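(* Let $1\le k\le n$ and $\lambda_0,\dots,\lambda_n\in\mathbb R$. The set of real solutions $(a_0,\dots,a_n)$ of the linear system $$\sum_{i=0}^n a_{i}\frac{\binom{k}{s}\binom{n-k}{i-s}}{\binom{n}{i}}=\sum_{i=0}^n\lambda_i\frac{\binom{k}{s}\binom{n-k}{i-s}}{\binom{n}{i}},\qquad 0\le s\le k,$$ is exactly the set of vectors of the form $$a_r=\sum_{i=k+1}^n(-1)^{k-r+1}\binom{i}{k}\binom{k}{r}\frac{i-k}{i-r}\,s_i+\lambda_r\quad(0\le r\le k),\qquad a_r=s_r+\lambda_r\quad(k+1\le r\le n),$$ with $s_{k+1},\dots,s_n\in\mathbb R$ arbitrary.
   Context: Convention: $\binom{m}{i}=0$ if $i<0$ or $i>m$. *)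

(* Defs.v *)
From HB Require Import structures.
From mathcomp Require Import all_boot all_order all_algebra.
From mathcomp Require Import reals.
Set Implicit Arguments. Unset Strict Implicit. Unset Printing Implicit Defensive.
Import Order.TTheory GRing.Theory Num.Theory.
Local Open Scope ring_scope.

Definition binomz (m : nat) (i : int) : nat :=
  match i with Posz j => 'C(m, j) | Negz _ => 0%N end.

Definition sysc (R : fieldType) (n k s i : nat) : R :=
  ('C(k, s) * binomz (n - k) (i%:Z - s%:Z))%:R / ('C(n, i))%:R.

(* Main.v *)
Require Import Defs.
From HB Require Import structures.
From mathcomp Require Import all_boot all_order all_algebra.
From mathcomp Require Import reals.
From mathcomp Require Import ring lra zify.
Import Order.TTheory GRing.Theory Num.Theory.
Local Open Scope ring_scope.

Lemma binsub (n k s : nat) : (s <= k)%N -> ('C(n,k) * 'C(k,s) = 'C(n,s) * 'C(n-s,k-s))%N.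
Proof.
move=> hsk; case: (leqP k n) => hkn.
  have hF : (0 < s`! * (k-s)`! * (n-k)`!)%N by rewrite !muln_gt0 !fact_gt0.
  apply/eqP; rewrite -(eqn_pmul2r hF); apply/eqP.
  transitivity (n`!).
    have h1 := bin_fact hkn; have h2 := bin_fact hsk.
    by rewrite -h1 -h2; ring.
  have h1 := bin_fact (leq_trans hsk hkn).
  have h2 : (k - s <= n - s)%N by lia.
  have h2' := bin_fact h2.
  have e : (n - s - (k - s) = n - k)%N by lia.
  rewrite e in h2'.
  by rewrite -h1 -h2'; ring.
rewrite (bin_small hkn) mul0n.
case: (leqP s n) => hsn; last by rewrite (bin_small hsn).
by rewrite (@bin_small (n-s)) ?muln0 //; lia.
Qed.

Lemma binsym (N a b : nat) : ('C(N,a) * 'C(N-a,b) = 'C(N,b) * 'C(N-b,a))%N.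
Proof.
case: (leqP (a + b) N) => hab.
  have hF : (0 < a`! * b`! * (N-a-b)`!)%N by rewrite !muln_gt0 !fact_gt0.
  apply/eqP; rewrite -(eqn_pmul2r hF); apply/eqP.
  transitivity (N`!).
    have h1 := @bin_fact N a ltac:(lia); have h2 := @bin_fact (N-a) b ltac:(lia).
    by rewrite -h1 -h2; ring.
  have h1 := @bin_fact N b ltac:(lia); have h2 := @bin_fact (N-b) a ltac:(lia).
  have e : (N - b - a = N - a - b)%N by lia.
  rewrite e in h2.
  by rewrite -h1 -h2; ring.
have z : forall a b, (N < a + b)%N -> ('C(N,a) * 'C(N-a,b) = 0)%N.
  move=> x y hxy; case: (leqP x N) => h.
    by rewrite (@bin_small (N-x)) ?muln0 //; lia.
  by rewrite bin_small.
by rewrite z // z //; lia.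
Qed.

Lemma natident (n k s i : nat) : (s <= k)%N -> (k <= n)%N -> (s <= i)%N -> (i <= n)%N ->
  ('C(k,s) * 'C(n-k,i-s) * 'C(n,k) = 'C(i,s) * 'C(n-i,k-s) * 'C(n,i))%N.
Proof.
move=> hsk hkn hsi hin.
rewrite [LHS](_ : _ = 'C(n-k,i-s) * ('C(n,k) * 'C(k,s)))%N; last by ring.
rewrite [RHS](_ : _ = 'C(n-i,k-s) * ('C(n,i) * 'C(i,s)))%N; last by ring.
rewrite !binsub //.
have := binsym (n - s) (k - s) (i - s).
have -> : (n - s - (k - s) = n - k)%N by lia.
have -> : (n - s - (i - s) = n - i)%N by lia.
move=> e. rewrite [LHS](_ : _ = 'C(n,s) * ('C(n-s,k-s) * 'C(n-k,i-s)))%N; last by ring.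
rewrite e; ring.
Qed.

Definition qq (R : fieldType) (n k s i : nat) : R := ('C(i,s) * 'C(n - i, k - s))%:R.

Lemma sysc_eq (R : realType) (n k s i : nat) : (s <= k)%N -> (k <= n)%N -> (i <= n)%N ->
  sysc R n k s i = qq R n k s i / ('C(n,k))%:R.
Proof.
move=> hsk hkn hin; rewrite /sysc /qq /binomz.
have hC : forall a b : nat, (b <= a)%N -> ('C(a,b)%:R : R) != 0.
  by move=> a b hab; rewrite pnatr_eq0 -lt0n bin_gt0.
case: (leqP s i) => hsi.
  have -> : (i%:Z - s%:Z = Posz (i - s))%R by rewrite subzn.
  apply/eqP; rewrite eqr_div ?hC //; apply/eqP.
  by rewrite -!natrM natident.
have -> : (i%:Z - s%:Z = Negz (s - i).-1)%R.
  rewrite NegzE prednK ?subn_gt0 //. rewrite -opprB subzn //; lia.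
by rewrite (bin_small hsi) muln0 mul0n !mul0r.
Qed.

Lemma ffR (R : comPzRingType) (x m : nat) :
  \prod_(l < m) (x%:R - (l:nat)%:R : R) = (x ^_ m)%:R.
Proof.
elim: m => [|m IH]; first by rewrite big_ord0 ffactn0.
rewrite big_ord_recr /= IH ffactnSr natrM.
case: (leqP m x) => h; first by rewrite natrB.
by rewrite ffact_small // !mul0r.
Qed.

Lemma size_prod_lin (R : fieldType) (I : finType) (P : pred I) (F : I -> {poly R}) :
  (forall i, P i -> (size (F i) <= 2)%N) -> (size (\prod_(i | P i) F i)%R <= #|P|.+1)%N.
Proof.
move=> hF; rewrite -sum1_card.
elim/big_rec2: _ => [|i d p Pi IH]; first by rewrite size_poly1.
apply: leq_trans (size_mul_leq _ _) _.
have := hF i Pi; lia.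
Qed.

Lemma Bm (R : realType) (t m : nat) :
  \prod_(i < (t + m).+1) (if (i:nat) != t then (t%:R - (i:nat)%:R : R) else 1)
  = (-1) ^+ m * (t`! * m`!)%:R.
Proof.
elim: m => [|m IH].
  rewrite addn0 big_ord_recr /= eqxx mulr1 expr0 mul1r fact0 muln1.
  rewrite -ffactnn -ffR; apply: eq_bigr => i _.
  by rewrite /= (ltn_eqF (ltn_ord i)).
rewrite addnS big_ord_recr /= IH.
have -> : ((t + m).+1 != t) by lia.
rewrite factS -addnS !natrM natrD exprS; ring.
Qed.

Definition cf (R : fieldType) (k j r : nat) : R :=
  (-1) ^+ (k - r + 1) * ('C(j, k) * 'C(k, r))%:R * ((j - k)%:R / (j - r)%:R).

Definition pit (R : fieldType) {k : nat} (t : 'I_k.+1) : {poly R} :=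
  \prod_(i < k.+1 | i != t) ('X - ((i:nat)%:R)%:P).

Lemma pit_size (R : fieldType) k (t : 'I_k.+1) : (size (pit R t) <= k.+1)%N.
Proof.
apply: leq_trans (@size_prod_lin _ _ _ _ _) _ => [i _|]; first by rewrite size_XsubC.
by rewrite ltnS (cardC1 t) card_ord.
Qed.

Lemma pit_at (R : fieldType) k (t u : 'I_k.+1) : u != t -> (pit R t).[(u:nat)%:R] = 0.
Proof. by move=> hu; rewrite /pit horner_prod (bigD1 u) //= hornerXsubC subrr mul0r. Qed.

Lemma pit_self (R : realType) k (t : 'I_k.+1) :
  (pit R t).[(t:nat)%:R] = (-1)^+(k-t) * (t`! * (k-t)`!)%:R.
Proof.
rewrite /pit horner_prod big_mkcond /=.
have := Bm R t (k - t); rewrite subnKC; last by rewrite -ltnS.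
move=> <-; apply: eq_bigr => i _; by rewrite hornerXsubC.
Qed.

Lemma pit_self_neq0 (R : realType) k (t : 'I_k.+1) : (pit R t).[(t:nat)%:R] != 0.
Proof. by rewrite pit_self mulf_eq0 signr_eq0 pnatr_eq0 muln_eq0 /= !(gtn_eqF (fact_gt0 _)). Qed.

Lemma pit_j (R : realType) k (t : 'I_k.+1) (j : nat) :
  (pit R t).[j%:R] * (j%:R - (t:nat)%:R) = (j ^_ k.+1)%:R.
Proof.
rewrite -ffR [RHS](bigD1 t) //= mulrC; congr (_ * _).
rewrite /pit horner_prod; apply: eq_big => // i; by rewrite hornerXsubC.
Qed.

Lemma K0 (R : realType) k (t : 'I_k.+1) (j : nat) : (k < j)%N ->
  (pit R t).[j%:R] = - cf R k j t * (pit R t).[(t:nat)%:R].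
Proof.
move=> hkj.
have htk : (t <= k)%N by rewrite -ltnS.
have htj : (t <= j)%N by lia.
have hz : (j%:R - (t:nat)%:R : R) != 0.
  by rewrite -natrB // pnatr_eq0 subn_eq0 -ltnNge; lia.
have hA : (pit R t).[j%:R] = (j ^_ k.+1)%:R / (j%:R - (t:nat)%:R).
  by rewrite -(@pit_j R k t j) mulfK.
have hn : (('C(j,k)*'C(k,t)) * (t`! * (k-t)`!) * (j - k) = j ^_ k.+1)%N.
  by rewrite -(mulnA 'C(j,k)) bin_fact // bin_ffact -ffactnSr.
have hs : (-1)^+(k-t) * (-1)^+(k-t) = 1 :> R by rewrite -exprMn mulrNN mulr1 expr1n.
rewrite hA pit_self /cf -hn !natrM (natrB _ htj) (natrB _ (ltnW hkj)) exprD expr1.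
rewrite [RHS](_ : _ = ((-1)^+(k-t) * (-1)^+(k-t)) * (('C(j, k))%:R * ('C(k, t))%:R * ((t`!)%:R * ((k - t)`!)%:R) * (j%:R - k%:R) / (j%:R - (t:nat)%:R))); last by ring.
by rewrite hs mul1r.
Qed.

Lemma Lag (R : realType) k (P : {poly R}) : (size P <= k.+1)%N -> forall x,
  P.[x] = \sum_(t < k.+1) P.[(t:nat)%:R] / (pit R t).[(t:nat)%:R] * (pit R t).[x].
Proof.
move=> hsz.
have hP : P = \sum_(t < k.+1) (P.[(t:nat)%:R] / (pit R t).[(t:nat)%:R]) *: pit R t.
  apply/eqP; rewrite -subr_eq0; apply/eqP.
  apply: (@roots_geq_poly_eq0 R _ [seq (nat_of_ord i)%:R | i <- enum (ordinal k.+1)]).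
  - apply/allP => x /mapP [u _ ->]; rewrite /root hornerD hornerN horner_sum (bigD1 u) //=.
    rewrite big1 ?addr0; last by move=> i hi; rewrite hornerZ (@pit_at R k i u) ?mulr0 // eq_sym.
    by rewrite hornerZ divfK ?pit_self_neq0 // subrr.
  - rewrite map_inj_uniq ?enum_uniq // => a b /eqP; rewrite eqr_nat => /eqP /val_inj //.
  - rewrite size_map size_enum_ord.
    apply: leq_trans (size_polyD _ _) _; rewrite geq_max hsz size_polyN /=.
    apply: leq_trans (size_sum _ _ _) _; apply/bigmax_leqP => t _.
    exact: leq_trans (size_scale_leq _ _) (@pit_size R k t).
move=> x; rewrite {1}hP horner_sum; apply: eq_bigr => t _; by rewrite hornerZ.
Qed.

Lemma Kk (R : realType) k (P : {poly R}) (j : nat) : (size P <= k.+1)%N -> (k < j)%N ->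
  \sum_(t < k.+1) cf R k j t * P.[(t:nat)%:R] + P.[j%:R] = 0.
Proof.
move=> hsz hkj; rewrite (@Lag R k P hsz (j%:R)) -big_split big1 // => t _ /=.
rewrite (@K0 R k t j hkj); have := @pit_self_neq0 R k t; set pt := (pit R t).[_] => hpt.
by field.
Qed.

Definition Ps (R : fieldType) (n k s : nat) : {poly R} :=
  ((s`! * (k-s)`!)%:R)^-1 *: (\prod_(l < s) ('X - ((l:nat)%:R)%:P) *
     \prod_(l < k - s) ((n%:R - (l:nat)%:R)%:P - 'X)).

Lemma Ps_size (R : fieldType) n k s : (s <= k)%N -> (size (Ps R n k s) <= k.+1)%N.
Proof.
move=> hsk; apply: leq_trans (size_scale_leq _ _) _.
apply: leq_trans (size_mul_leq _ _) _.
have h1 := @size_prod_lin R _ xpredT (fun l : 'I_s => 'X - ((l:nat)%:R)%:P) (fun l _ => eq_leq (size_XsubC _)).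
have h2 := @size_prod_lin R _ xpredT (fun l : 'I_(k - s) => ((n%:R - (l:nat)%:R)%:P - 'X))
  (fun l _ => ltac:(by rewrite /= -opprB size_polyN size_XsubC)).
rewrite !cardT !size_enum_ord in h1 h2.
apply: (@leq_trans (s.+1 + (k - s).+1).-1); last by lia.
by rewrite -!subn1 leq_sub2r // leq_add.
Qed.

Lemma Ps_eval (R : realType) n k s i : (s <= k)%N -> (i <= n)%N ->
  (Ps R n k s).[i%:R] = qq R n k s i.
Proof.
move=> hsk hin; rewrite /Ps hornerZ hornerM !horner_prod.
have e1 : \prod_(l < s) ('X - ((l:nat)%:R)%:P).[i%:R] = (i ^_ s)%:R :> R.
  by rewrite -ffR; apply: eq_bigr => l _; rewrite hornerXsubC.
have e2 : \prod_(l < k - s) ((n%:R - (l:nat)%:R)%:P - 'X).[i%:R] = ((n - i) ^_ (k - s))%:R :> R.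
  rewrite -ffR; apply: eq_bigr => l _; rewrite hornerD hornerN hornerC hornerX natrB //.
  by rewrite addrAC.
rewrite e1 e2 /qq -!bin_ffact !natrM.
have f1 : (s`!%:R : R) != 0 by rewrite pnatr_eq0 -lt0n fact_gt0.
have f2 : ((k - s)`!%:R : R) != 0 by rewrite pnatr_eq0 -lt0n fact_gt0.
rewrite [X in _^-1 * X](_ : _ = (s`!%:R * (k - s)`!%:R) * ('C(i, s)%:R * 'C(n - i, k - s)%:R)); last by ring.
by rewrite mulKf // mulf_neq0.
Qed.

Lemma Gsum (R : realType) n k (t d : 'I_n.+1 -> R) (P : {poly R}) :
  (k <= n)%N -> (size P <= k.+1)%N ->
  (forall r : 'I_n.+1, (r <= k)%N -> d r = \sum_(i < n.+1 | (k < i)%N) cf R k i r * t i) ->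
  (forall r : 'I_n.+1, (k < r)%N -> d r = t r) ->
  \sum_(r < n.+1) d r * P.[(r:nat)%:R] = 0.
Proof.
move=> hkn hsz hd ht.
rewrite (bigID (fun r : 'I_n.+1 => (r <= k)%N)) /=.
under eq_bigr => r hr do rewrite (hd r hr) mulr_suml.
rewrite exchange_big /=.
under [X in _ + X]eq_bigr => r hr do rewrite (ht r (ltac:(by rewrite ltnNge))).
rewrite [X in _ + X](eq_bigl (fun r : 'I_n.+1 => (k < r)%N)); last by move=> r; rewrite ltnNge.
rewrite -big_split /=; apply: big1 => i hi.
have hw : \sum_(r < n.+1 | (r <= k)%N) cf R k i r * P.[(r:nat)%:R]
          = \sum_(t < k.+1) cf R k i t * P.[(t:nat)%:R].
  rewrite [RHS](big_ord_widen n.+1 (fun r : nat => cf R k i r * P.[r%:R])) //.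
have := @Kk R k P i hsz hi; rewrite -hw => hK.
transitivity (t i * (\sum_(r < n.+1 | (r <= k)%N) cf R k i r * P.[(r:nat)%:R] + P.[i%:R])); last by rewrite hK mulr0.
rewrite mulrDr mulr_sumr; congr (_ + _).
by apply: eq_bigr => r _; rewrite mulrCA mulrA.
Qed.

Lemma Tri (R : realType) n k (g : 'I_n.+1 -> R) : (k <= n)%N ->
  (forall r : 'I_n.+1, (k < r)%N -> g r = 0) ->
  (forall s, (s <= k)%N -> \sum_(i < n.+1) g i * qq R n k s i = 0) ->
  forall r, g r = 0.
Proof.
move=> hkn hg hs.
suff H : forall m, (m <= k.+1)%N -> forall r : 'I_n.+1, (k.+1 - m <= r)%N -> g r = 0.
  by move=> r; apply: (H k.+1) => //; rewrite subnn.
elim=> [|m IH] hm r hr; first by apply: hg; rewrite subn0 in hr.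
case: (leqP (k.+1 - m) r) => h; first by apply: IH => //; lia.
have er : (r : nat) = (k - m)%N by lia.
have := hs (k - m)%N (leq_subr _ _).
rewrite (bigD1 r) //= big1; last first.
  move=> i /eqP hi.
  have hne : (i : nat) <> r by move=> e; apply: hi; apply: val_inj.
  case: (ltnP i (k - m)) => h2; first by rewrite /qq bin_small // mul0n mulr0.
  by rewrite IH ?mul0r //; lia.
rewrite addr0 => /eqP; rewrite mulf_eq0 => /orP [/eqP //|].
rewrite /qq er binn mul1n pnatr_eq0 => /eqP hb; exfalso.
have : (0 < 'C(n - (k - m), k - (k - m)))%N by rewrite bin_gt0; lia.
by rewrite hb.
Qed.

Theorem mainTheorem16 (R : realType) (n k : nat) (hk1 : (1 <= k)%N) (hkn : (k <= n)%N)
    (lam : 'I_n.+1 -> R) (a : 'I_n.+1 -> R) :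
  (forall s : 'I_k.+1,
     \sum_(i < n.+1) a i * sysc R n k s i = \sum_(i < n.+1) lam i * sysc R n k s i)
  <->
  (exists t : 'I_n.+1 -> R,
     (forall r : 'I_n.+1, (r <= k)%N ->
        a r = \sum_(i < n.+1 | (k < i)%N)
                (-1) ^+ (k - r + 1) * ('C(i, k) * 'C(k, r))%:R
                  * ((i - k)%:R / (i - r)%:R) * t i + lam r) /\
     (forall r : 'I_n.+1, (k < r)%N -> a r = t r + lam r)).
Proof.
have Hsys : forall s : 'I_k.+1,
  (\sum_(i < n.+1) a i * sysc R n k s i = \sum_(i < n.+1) lam i * sysc R n k s i) <->
  (\sum_(i < n.+1) (a i - lam i) * (Ps R n k s).[(i:nat)%:R] = 0).
  move=> s; have hsk : (s <= k)%N by rewrite -ltnS.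
  have hC : ('C(n,k)%:R : R) != 0 by rewrite pnatr_eq0 -lt0n bin_gt0.
  have -> : (\sum_(i < n.+1) a i * sysc R n k s i = \sum_(i < n.+1) lam i * sysc R n k s i) <->
     (\sum_(i < n.+1) a i * sysc R n k s i - \sum_(i < n.+1) lam i * sysc R n k s i = 0).
    by split => [->|/eqP]; [rewrite subrr | rewrite subr_eq0 => /eqP].
  have -> : \sum_(i < n.+1) a i * sysc R n k s i - \sum_(i < n.+1) lam i * sysc R n k s i
     = (\sum_(i < n.+1) (a i - lam i) * (Ps R n k s).[(i:nat)%:R]) / ('C(n,k))%:R.
    rewrite -sumrB mulr_suml; apply: eq_bigr => i _.
    have hin : (i <= n)%N by rewrite -ltnS.
    by rewrite sysc_eq // Ps_eval //; ring.
  split => [/eqP|->]; last by rewrite mul0r.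
  by rewrite mulf_eq0 invr_eq0 (negbTE hC) orbF => /eqP.
split.
- move=> H; exists (fun i => a i - lam i).
  pose D (r : 'I_n.+1) := if (r <= k)%N then
      \sum_(i < n.+1 | (k < i)%N) cf R k i r * (a i - lam i) else a r - lam r.
  have hz := @Tri R n k (fun r => (a r - lam r) - D r) hkn.
  have hz' : forall r, (a r - lam r) - D r = 0.
    apply: hz.
      by move=> r hr; rewrite /D leqNgt hr /= subrr.
    move=> s hs.
    rewrite (eq_bigr (fun i : 'I_n.+1 => (a i - lam i) * (Ps R n k s).[(i:nat)%:R]
                         - D i * (Ps R n k s).[(i:nat)%:R])); last first.
      move=> i _; have hin : (i <= n)%N by rewrite -ltnS.
      by rewrite -Ps_eval // mulrBl.
    rewrite sumrB (Hsys (Ordinal (hs : (s < k.+1)%N))).1 ?H // sub0r.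
    rewrite (@Gsum R n k (fun i => a i - lam i) D) ?oppr0 //.
    - exact: Ps_size.
    - by move=> r hr; rewrite /D hr.
    - by move=> r hr; rewrite /D leqNgt hr.
  split.
  + move=> r hr; have := hz' r; rewrite /D hr => /eqP; rewrite subr_eq0 => /eqP he.
    rewrite [X in _ = X + _](_ : _ = \sum_(i < n.+1 | (k < i)%N) cf R k i r * (a i - lam i)) //.
    by rewrite -he subrK.
  + by move=> r _; rewrite subrK.
- move=> [t [H1 H2]] s; apply/(Hsys s).
  apply: (@Gsum R n k t (fun i => a i - lam i)) => //.
  - by apply: Ps_size; rewrite -ltnS.
  - by move=> r hr; rewrite (H1 r hr) addrK.
  - by move=> r hr; rewrite (H2 r hr) addrK.
Qed.
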